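(* Let $D$ be an oriented knot diagram and let $b$ be a point of $D$ that is not a crossing. Run the robot on $D$ starting at $b$. Then the resulting diagram (the post-robot diagram) is ascending from $b$.
   Context: The robot operates as follows: starting at $b$, it travels along the knot in the direction of the orientation, visiting every crossing twice, and stops when it returns to $b$. Whenever it arrives at a crossing along the over-strand, it leaves the crossing unchanged; whenever it arrives at a crossing along the under-strand, it switches that crossing so that the strand it is travelling on becomes the over-strand, and then passes through. The diagram obtained at the end is the post-robot diagram. An oriented knot diagram is ascending from a point $b$ (not a crossing) if, travelling along the knot from $b$ in the direction of the orientation, every crossing is first met along its under-strand and later along its over-strand; it is descending from $b$ if every crossing is first met along its over-strand. *)

(* Defs.v *)
(* Combinatorial model of an oriented knot diagram, read from
   a base point b (not a crossing) in the direction of the orientation: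
   - [w : seq nat] is the Gauss word: the i-th entry is the label of the
     i-th crossing passage met when travelling from b;
   - [ov : seq bool] records, for the i-th passage, whether the strand
     travelled on is the over-strand (true) or the under-strand (false). *)
From mathcomp Require Import all_boot.
Set Implicit Arguments. Unset Strict Implicit. Unset Printing Implicit Defensive.

Definition knot_diagram (w : seq nat) (ov : seq bool) : Prop :=
  [/\ forall c, c \in w -> count_mem c w = 2,
      size ov = size w &
      forall i j, i < j -> j < size w -> nth 0 w i = nth 0 w j ->
        nth false ov i != nth false ov j].

Definition robot_step (w : seq nat) (ov : seq bool) (i : nat) : seq bool :=
  if nth false ov i then ov
  else [seq (if nth 0 w j == nth 0 w i then j == i else nth false ov j)
        | j <- iota 0 (size w)].

Definition robot (w : seq nat) (ov : seq bool) : seq bool :=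
  foldl (robot_step w) ov (iota 0 (size w)).

Definition ascending (w : seq nat) (ov : seq bool) : Prop :=
  forall i j, i < j -> j < size w -> nth 0 w i = nth 0 w j ->
    nth false ov i = false /\ nth false ov j = true.

(* Main.v *)
Require Import Defs.
From mathcomp Require Import all_boot.

Lemma three (w : seq nat) c i j k : i < j -> j < size w -> k < size w ->
  k != i -> k != j -> nth 0 w i = c -> nth 0 w j = c -> nth 0 w k = c ->
  3 <= count_mem c w.
Proof.
move=> ij jn kn ki kj wi wj wk.
rewrite -(mkseq_nth 0 w) /mkseq count_map -size_filter.
have -> : 3 = size [:: i; j; k] by [].
apply: uniq_leq_size.
  rewrite /= !inE negb_or (ltn_eqF ij) eq_sym ki eq_sym kj. by [].
move=> x; rewrite !inE mem_filter mem_iota /= add0n.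
have in_ : i < size w by exact: ltn_trans ij jn.
by case/or3P=> /eqP ->; rewrite /= ?wi ?wj ?wk eqxx.
Qed.

Definition inv (w : seq nat) (s : seq bool) k :=
  [/\ size s = size w,
      forall i j, i < j -> j < size w -> nth 0 w i = nth 0 w j ->
        nth false s i != nth false s j &
      forall i j, i < j -> j < k -> nth 0 w i = nth 0 w j ->
        nth false s i = false /\ nth false s j = true].

Lemma nth_step w s k j : size s = size w -> j < size w ->
  nth false (robot_step w s k) j =
  if nth false s k then nth false s j
  else (if nth 0 w j == nth 0 w k then j == k else nth false s j).
Proof.
move=> ss jn; rewrite /robot_step; case: (nth false s k) => //.
by rewrite (nth_map 0) ?size_iota // nth_iota.
Qed.

Lemma size_step w s k : size s = size w -> size (robot_step w s k) = size w.
Proof.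
by move=> ss; rewrite /robot_step; case: (nth false s k); rewrite ?size_map ?size_iota.
Qed.

Lemma step_inv w s k : (forall c, c \in w -> count_mem c w = 2) ->
  k < size w -> inv w s k -> inv w (robot_step w s k) k.+1.
Proof.
move=> cnt kn [ss B C].
have no3 : forall i j, i < j -> j < size w -> k != i -> k != j ->
    nth 0 w i = nth 0 w k -> nth 0 w j = nth 0 w k -> False.
  move=> i j ij jn ki kj wi wj.
  have := @three w _ i j k ij jn kn ki kj wi wj erefl.
  by rewrite cnt ?mem_nth.
split; first exact: size_step.
- move=> i j ij jn wij.
  have iN : i < size w by exact: ltn_trans ij jn.
  rewrite !nth_step //.
  case sk: (nth false s k); first exact: B i j ij jn wij.
  rewrite -wij.
  case: (nth 0 w i =P nth 0 w k) => wik; last exact: B i j ij jn wij.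
  case: (eqVneq i k) => [eik|ik]; case: (eqVneq j k) => [ejk|jk] //=.
  + by move: ij; rewrite eik ejk ltnn.
  + by exfalso; apply: (no3 i j ij jn _ _ wik); rewrite ?(eq_sym k) // -wij.
- move=> i j ij; rewrite ltnS leq_eqVlt => /orP [/eqP ejk | jk] wij; first subst j.
  + have iN : i < size w by exact: ltn_trans ij kn.
    rewrite !nth_step // wij eqxx eqxx (ltn_eqF ij).
    case sk: (nth false s k) => //.
    have := B i k ij kn wij; rewrite sk; case: (nth false s i) => //.
  + have jN : j < size w by exact: ltn_trans jk kn.
    have iN : i < size w by exact: ltn_trans ij jN.
    rewrite !nth_step //.
    case sk: (nth false s k); first exact: C i j ij jk wij.
    rewrite -wij; case: (nth 0 w i =P nth 0 w k) => wik; last exact: C i j ij jk wij.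
    exfalso; apply: (no3 i j) => //.
    * by rewrite neq_ltn (ltn_trans ij jk) orbT.
    * by rewrite neq_ltn jk orbT.
    * by rewrite -wij.
Qed.

Theorem theorem1p2 (w : seq nat) (ov : seq bool) :
  knot_diagram w ov -> ascending w (robot w ov).
Proof.
case=> cnt sz B.
have H : forall k, k <= size w -> inv w (foldl (robot_step w) ov (iota 0 k)) k.
  elim=> [|k IH] kn; first by split.
  have -> : iota 0 k.+1 = iota 0 k ++ [:: k] by rewrite -addn1 iotaD.
  rewrite foldl_cat /=.
  apply: step_inv => //; apply: IH; exact: ltnW.
by case: (H (size w) (leqnn _)) => _ _ C; exact: C.
Qed.
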